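(* Let $\mathcal{D}=(\Omega,\mathcal{B})$ be a supersimple $2$-$(n,4,\lambda)$ design. Fix $\infty\in\Omega$ and define $G:=\mathcal{L}_\infty(\mathcal{D})$. The following are equivalent: (i) $G$ is a group; (ii) $G=\mathcal{L}(\mathcal{D})=\langle[a,b]\mid a,b\in\Omega\rangle$; (iii) $\mathcal{L}(\mathcal{D})=\mathcal{L}_x(\mathcal{D})$ for all $x\in\Omega$. Furthermore, if one (and therefore all) of these conditions hold, then $G$ is transitive on $\Omega$ and $\operatorname{stab}_G(\infty)=\pi_\infty(\mathcal{D})$.
   Context: A $2$-$(n,4,\lambda)$ design $(\Omega,\mathcal{B})$: $n$ points, a multiset of $4$-subsets (lines), every $2$-subset in exactly $\lambda$ lines; supersimple: distinct lines meet in at most two points. For distinct $a,b$ with lines $\{a,b,a_i,b_i\}$ ($1\le i\le\lambda$) through them, $[a,b]:=(a,b)\prod_i(a_i,b_i)\in\operatorname{Sym}(\Omega)$; $[a,a]:=1$. Permutations act on the right, products composed left to right; move sequence $[a_0,\dots,a_k]:=[a_0,a_1][a_1,a_2]\cdots[a_{k-1},a_k]$. $\mathcal{L}(\mathcal{D})$ is the set of all move sequences; $\mathcal{L}_x(\mathcal{D})$ is the set of move sequences $[x,a_1,\dots,a_k]$ ($k\ge1$) starting at $x$; $\pi_\infty(\mathcal{D})$ is the set of move sequences starting and ending at $\infty$. *)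

(* Defs.v *)
From mathcomp Require Import all_boot all_fingroup.
Set Implicit Arguments. Unset Strict Implicit. Unset Printing Implicit Defensive.

(* Points: a finite type Omega.  Lines: a multiset of 4-subsets, given as a
   list (repetitions allowed) of sets. *)

Definition is_2design (Omega : finType) (n k lam : nat) (B : seq {set Omega}) : Prop :=
  [/\ #|Omega| = n,
      (forall L, L \in B -> #|L| = k) &
      (forall a b : Omega, a != b ->
         count (fun L : {set Omega} => (a \in L) && (b \in L)) B = lam)].

Definition supersimple (Omega : finType) (B : seq {set Omega}) : Prop :=
  forall i j, i < size B -> j < size B -> i != j ->
    #|nth set0 B i :&: nth set0 B j| <= 2.

Definition other1 (Omega : finType) (a b : Omega) (L : {set Omega}) : Omega :=
  nth a (enum (L :\: [set a; b])) 0.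
Definition other2 (Omega : finType) (a b : Omega) (L : {set Omega}) : Omega :=
  nth a (enum (L :\: [set a; b])) 1.

(* The move [a,b] = (a,b) prod_i (a_i,b_i);  [a,a] = 1.
   mathcomp permutations act on the right and products compose left to right,
   matching the paper's convention. *)
Definition move (Omega : finType) (B : seq {set Omega}) (a b : Omega) : {perm Omega} :=
  if a == b then 1%g
  else (tperm a b * \prod_(L <- B | (a \in L) && (b \in L))
                       tperm (other1 a b L) (other2 a b L))%g.

Fixpoint move_seq (Omega : finType) (B : seq {set Omega}) (a0 : Omega) (s : seq Omega)
  : {perm Omega} :=
  match s with
  | [::] => 1%g
  | a1 :: s' => (move B a0 a1 * move_seq B a1 s')%g
  end.

Definition inL (Omega : finType) (B : seq {set Omega}) (g : {perm Omega}) : Prop :=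
  exists a0 s, g = move_seq B a0 s.

Definition inLx (Omega : finType) (B : seq {set Omega}) (x : Omega) (g : {perm Omega}) : Prop :=
  exists s, size s >= 1 /\ g = move_seq B x s.

Definition inPi (Omega : finType) (B : seq {set Omega}) (x : Omega) (g : {perm Omega}) : Prop :=
  exists s, size s >= 1 /\ last x s = x /\ g = move_seq B x s.

Definition is_group (Omega : finType) (P : {perm Omega} -> Prop) : Prop :=
  [/\ P 1%g, (forall g h, P g -> P h -> P (g * h)%g) & (forall g, P g -> P g^-1%g)].

Definition moves (Omega : finType) (B : seq {set Omega}) : {set {perm Omega}} :=
  [set move B a b | a : Omega, b : Omega].

(* Main.v *)
Require Import Defs.
From mathcomp Require Import all_boot all_fingroup.

Section Aux.
Variables (Omega : finType) (B : seq {set Omega}).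

Lemma nth_other_neq (a b : Omega) (L : {set Omega}) i :
  a != b -> nth a (enum (L :\: [set a; b])) i != b.
Proof.
move=> ab; case: (ltnP i (size (enum (L :\: [set a; b])))) => h.
  have := mem_nth a h; rewrite mem_enum in_setD in_set2.
  by case/andP => /norP [_ ->].
by rewrite nth_default.
Qed.

Lemma move_start (a b : Omega) : move B a b a = b.
Proof.
rewrite /move; case: eqP => [->|/eqP ne]; first by rewrite perm1.
rewrite permM tpermL.
apply: (big_ind (fun p : {perm Omega} => p b = b)).
- by rewrite perm1.
- by move=> p q hp hq; rewrite permM hp hq.
- by move=> L _; rewrite tpermD // nth_other_neq.
Qed.

Lemma move_seq_start (a0 : Omega) s : move_seq B a0 s a0 = last a0 s.
Proof.
elim: s a0 => [|a1 s IH] a0 /=; first by rewrite perm1.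
by rewrite permM move_start IH.
Qed.

Lemma move_seq_cat (a0 : Omega) s t :
  move_seq B a0 (s ++ t) = (move_seq B a0 s * move_seq B (last a0 s) t)%g.
Proof.
elim: s a0 => [|a1 s IH] a0 /=; first by rewrite mul1g.
by rewrite IH mulgA.
Qed.

Lemma inL_gen g : inL B g -> g \in <<moves B>>%g.
Proof.
case=> a0 [s ->]; elim: s a0 => [|a1 s IH] a0 /=; first exact: group1.
rewrite groupM // mem_gen //; apply/imset2P; exists a0 a1 => //.
Qed.

Lemma group_pow (P : {perm Omega} -> Prop) g k :
  P 1%g -> (forall g h, P g -> P h -> P (g * h)%g) -> P g -> P (g ^+ k)%g.
Proof.
move=> P1 PM Pg; elim: k => [|k IH]; first by rewrite expg0.
by rewrite expgS; apply: PM.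
Qed.

Lemma inv_pow (g : {perm Omega}) : (g^-1 = g ^+ (#[g].-1))%g.
Proof.
have h : (g * g ^+ (#[g].-1) = 1)%g.
  by rewrite -expgS prednK ?order_gt0 // expg_order.
by rewrite -[(g^-1)%g]mulg1 -h mulKg.
Qed.

End Aux.

Theorem lemma2p6 (Omega : finType) (n lam : nat) (B : seq {set Omega})
  (Hdes : is_2design n 4 lam B) (Hss : supersimple B) (inf : Omega) :
  let G := inLx B inf in
  ([/\ (is_group G -> (forall g, G g <-> inL B g) /\
                      (forall g, inL B g <-> g \in <<moves B>>%g)),
       ((forall g, G g <-> inL B g) /\ (forall g, inL B g <-> g \in <<moves B>>%g) ->
          (forall x g, inL B g <-> inLx B x g)) &
       ((forall x g, inL B g <-> inLx B x g) -> is_group G)])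
  /\
  (is_group G ->
     (forall x y : Omega, exists2 g, G g & g x = y) /\
     (forall g, (G g /\ g inf = inf) <-> inPi B inf g)).
Proof.
move=> G.
have Ginf : forall a, G (move B inf a).
  by move=> a; exists [:: a]; split => //=; rewrite mulg1.
have GL : is_group G -> forall g, G g <-> inL B g.
  move=> [G1 GM GV] g; split; first by case=> s [_ ->]; exists inf, s.
  case=> a0 [s ->].
  have H : G (move_seq B inf (a0 :: s)) by exists (a0 :: s).
  have := GM _ _ (GV _ (Ginf a0)) H; rewrite /= mulKg //.
have Gmove : is_group G -> forall a b, G (move B a b).
  move=> gG a b; apply/(GL gG); exists a, [:: b]; by rewrite /= mulg1.
have genG : is_group G -> forall g, g \in <<moves B>>%g -> G g.
  move=> gG g /gen_prodgP [k [c Hc ->]].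
  case: gG => G1 GM GV.
  apply: (big_ind G G1 GM).
  move=> i _; have /imset2P [a b _ _ ->] := Hc i; exact: Gmove.
split; first split.
- move=> gG; split; first exact: GL.
  move=> g; split; first exact: inL_gen.
  by move=> /(genG gG) /(GL gG).
- move=> [GL' Lgen] x g; split; last by case=> s [_ ->]; exists x, s.
  move=> Lg.
  have h1 : ((move B x inf)^-1 * g)%g \in <<moves B>>%g.
    rewrite groupM ?groupV ?(Lgen g).1 // mem_gen //.
    by apply/imset2P; exists x inf.
  have h2 : G ((move B x inf)^-1 * g)%g.
    by apply/GL'; apply/Lgen.
  case: h2 => s [_ Hs].
  exists (inf :: s); split => //=.
  by rewrite -Hs mulKVg.
- move=> H.
  have G1 : G 1%g by exists [:: inf]; split => //=; rewrite /move eqxx mulg1.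
  have GM : forall g h, G g -> G h -> G (g * h)%g.
    move=> g h [s [s1 ->]] Gh.
    have /(H (last inf s)) [t [_ ->]] : inL B h by case: Gh => t [_ ->]; exists inf, t.
    exists (s ++ t); split; first by rewrite size_cat; case: s s1.
    by rewrite move_seq_cat.
  have gG : is_group G.
    split => // g Gg; rewrite inv_pow; exact: group_pow.
  exact: gG.
- move=> gG; split.
  + move=> x y; exists (move B x y); first exact: Gmove.
    exact: move_start.
  + move=> g; split.
    * case=> [[s [s1 ->]]]; rewrite move_seq_start => hl.
      by exists s.
    * case=> s [s1 [hl ->]]; split; first by exists s.
      by rewrite move_seq_start.
Qed.
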